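(* Let $\mathcal S$ be a $2$-$(v,k,\lambda)$ design admitting a flag-transitive automorphism group $\Gamma$, with $v=k+1$ or $v=k+2$. Then one of the following holds: (1) $\mathcal S$ is the complete $2$-$(v,k,\lambda)$ design and $\Gamma$ acts $2$-transitively on points; (2) $k$ is odd and $\Gamma$ is a point-primitive group of rank $3$ with subdegrees $1,\frac{k+1}{2},\frac{k+1}{2}$.
   Context: A complete $2$-$(v,k,\lambda)$ design has all $k$-subsets as blocks. *)

(* Defs.v *)
From mathcomp Require Import all_boot all_fingroup all_solvable.
Set Implicit Arguments. Unset Strict Implicit. Unset Printing Implicit Defensive.
Local Open Scope group_scope.

Definition is_2design (T : finType) (B : {set {set T}}) (v k lam : nat) : Prop :=
  [/\ #|T| = v, (2 <= k)%N, (0 < lam)%N,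
      forall b, b \in B -> #|b| = k
    & forall x y : T, x != y -> #|[set b in B | (x \in b) && (y \in b)]| = lam].

Definition is_autgroup (T : finType) (B : {set {set T}}) (G : {group {perm T}}) : Prop :=
  forall g, g \in G -> forall b, b \in B -> (g @: b) \in B.

Definition flag_transitive (T : finType) (B : {set {set T}}) (G : {group {perm T}}) : Prop :=
  forall x y (b c : {set T}), b \in B -> x \in b -> c \in B -> y \in c ->
    exists2 g, g \in G & g x = y /\ g @: b = c.

Definition complete_design (T : finType) (B : {set {set T}}) (k : nat) : Prop :=
  B = [set b : {set T} | #|b| == k].

Definition stab_orbits (T : finType) (G : {group {perm T}}) (x : T) : {set {set T}} :=
  orbit 'P 'C_G[x | 'P] @: [set: T].

Definition rank3_subdegrees (T : finType) (G : {group {perm T}}) (d : nat) : Prop :=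
  [transitive G, on [set: T] | 'P] /\
  forall x : T, #|stab_orbits G x| = 3 /\
    forall O, O \in stab_orbits G x -> O != [set x] -> #|O| = d.

(* Main.v *)
Require Import Defs.
From mathcomp Require Import all_boot all_fingroup all_solvable.
From mathcomp Require Import zify.
Local Open Scope group_scope.

Lemma trans2 {T : finType} (G : {group {perm T}}) (x0 y0 : T) : x0 != y0 ->
 (forall x1 y1 x2 y2 : T, x1 != y1 -> x2 != y2 ->
    exists2 g, g \in G & g x1 = x2 /\ g y1 = y2) ->
 [transitive^2 G, on [set: T] | 'P].
Proof.
move=> n0 H.
have dtP (a b : T) : ([tuple a; b] \in 2.-dtuple([set: T])) = (a != b).
  rewrite inE /= andbT inE; apply/andP/idP => [[] //| ->]; split=> //.
apply/imsetP; exists [tuple x0; y0]; first by rewrite dtP.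
apply/setP => t; apply/idP/idP.
- case/tupleP: t => a t; case/tupleP: t => b t; rewrite (tuple0 t) => dt.
  have ab : a != b by rewrite -dtP.
  have [g Gg [ga gb]] := H _ _ _ _ n0 ab.
  apply/imsetP; exists g => //; apply: val_inj => /=.
  by rewrite !apermE ga gb.
- case/imsetP => g Gg ->.
  have -> : ('P * 2)%act [tuple x0; y0] g = [tuple g x0; g y0].
    by apply: val_inj => /=; rewrite !apermE.
  by rewrite dtP (inj_eq perm_inj).
Qed.

Lemma split_card {U : finType} (A : {set U}) (P Q : pred U) :
  #|[set b in A | P b]| = #|[set b in A | P b && Q b]| + #|[set b in A | P b && ~~ Q b]|.
Proof.
rewrite -(cardsID [set b | Q b] [set b in A | P b]); congr (_ + _);
  apply: eq_card => b; rewrite !inE; by case: (b \in A); case: (P b); case: (Q b).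
Qed.

Lemma split_card0 {U : finType} (A : {set U}) (Q : pred U) :
  #|A| = #|[set b in A | Q b]| + #|[set b in A | ~~ Q b]|.
Proof.
rewrite -(cardsID [set b | Q b] A); congr (_ + _);
  apply: eq_card => b; rewrite !inE; by case: (b \in A); case: (Q b).
Qed.

Theorem lemma5p2 (T : finType) (B : {set {set T}}) (v k lam : nat)
    (G : {group {perm T}}) :
  is_2design B v k lam -> is_autgroup B G -> flag_transitive B G ->
  (v = k.+1 \/ v = k.+2) ->
  (complete_design B k /\ [transitive^2 G, on [set: T] | 'P])
  \/
  (odd k /\ [primitive G, on [set: T] | 'P] /\ rank3_subdegrees G (k.+1)./2).
Proof.
move=> [cardT k2 lam0 Bk Hpair] Haut Hflag Hv.
left.
have v3 : (3 <= #|T|)%N by rewrite cardT; case: Hv => ->; lia.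
have other (x : T) : exists y : T, y != x.
  have : (0 < #|[set~ x]|)%N by rewrite cardsC1; lia.
  by case/card_gt0P => y; rewrite !inE => ?; exists y.
have through (x : T) : exists2 b, b \in B & x \in b.
  have [y yx] := other x.
  have : (0 < #|[set b in B | (x \in b) && (y \in b)]|)%N by rewrite Hpair // eq_sym.
  by case/card_gt0P => b; rewrite !inE => /andP[? /andP[? _]]; exists b.
have trans (x y : T) : exists2 g, g \in G & g x = y.
  have [b Bb xb] := through x; have [c Bc yc] := through y.
  by have [g Gg [gx _]] := Hflag x y b c Bb xb Bc yc; exists g.
pose m x := #|[set b in B | x \notin b]|.
have mle (x y : T) : (m x <= m y)%N.
  have [g Gg gx] := trans x y.
  rewrite /m -(card_imset _ (imset_inj (@perm_inj _ g))).
  apply: subset_leq_card; apply/subsetP => c /imsetP[b].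
  rewrite !inE => /andP[Bb xb] ->; rewrite Haut //= -gx mem_imset //.
  exact: perm_inj.
have meq (x y : T) : m x = m y by apply/eqP; rewrite eqn_leq !mle.
have [x0 _] : exists x0 : T, true.
  have : (0 < #|T|)%N by lia.
  by case/card_gt0P => x0 _; exists x0.
have [b0 Bb0 _] := through x0.
have cC (b : {set T}) : #|~: b| = #|T| - #|b| by have := cardsC b; lia.
have compB (b : {set T}) : #|b| = k -> b \in B.
  move=> bk; case: Hv => Hv.
  - have : #|~: b0| == 1%N by rewrite cC (Bk _ Bb0) cardT Hv; apply/eqP; lia.
    case/cards1P => p Hp.
    have : #|~: b| == 1%N by rewrite cC bk cardT Hv; apply/eqP; lia.
    case/cards1P => q Hq.
    have : (0 < m q)%N.
      rewrite (meq q p); apply/card_gt0P; exists b0; rewrite !inE Bb0 /=.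
      have : p \in ~: b0 by rewrite Hp inE.
      by rewrite inE.
    case/card_gt0P => c; rewrite !inE => /andP[Bc qc].
    have cb : c \subset b.
      apply/subsetP => z zc; rewrite -[b]setCK Hq !inE; apply/eqP => zq.
      by move: qc; rewrite -zq zc.
    have -> : b = c by apply/eqP; rewrite eq_sym eqEcard cb (Bk _ Bc) bk leqnn.
    exact: Bc.
  - have Nc (x y : T) : x != y ->
      #|[set b in B | (y \notin b) && (x \notin b)]| = m x0 - (#|B| - m x0 - lam).
      move=> xy.
      have s1 := split_card0 B (fun b => x \in b).
      have s2 := split_card B (fun b => x \in b) (fun b => y \in b).
      have s3 := split_card B (fun b => y \notin b) (fun b => x \in b).
      cbv beta in s1, s2, s3.
      have e : [set b in B | (y \notin b) && (x \in b)] = [set b in B | (x \in b) && ~~ (y \in b)].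
        by apply/setP => d; rewrite !inE; case: (d \in B); case: (x \in d); case: (y \in d).
      rewrite e in s3; rewrite Hpair // in s2.
      have := meq x x0; have := meq y x0; rewrite /m => e1 e2.
      lia.
    have : #|~: b0| == 2%N by rewrite cC (Bk _ Bb0) cardT Hv; apply/eqP; lia.
    case/cards2P => p [q [pq Hp]].
    have : #|~: b| == 2%N by rewrite cC bk cardT Hv; apply/eqP; lia.
    case/cards2P => x [y [xy Hq]].
    have : (0 < #|[set b in B | (y \notin b) && (x \notin b)]|)%N.
      rewrite Nc // -(Nc p q) //; apply/card_gt0P; exists b0; rewrite !inE Bb0 /=.
      have : p \in ~: b0 by rewrite Hp !inE eqxx.
      have : q \in ~: b0 by rewrite Hp !inE eqxx orbT.
      by rewrite !inE => -> ->.
    case/card_gt0P => c; rewrite !inE => /andP[Bc /andP[yc xc]].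
    have cb : c \subset b.
      apply/subsetP => z zc; rewrite -[b]setCK Hq !inE; apply/norP; split; apply/eqP => zq.
        by move: xc; rewrite -zq zc.
      by move: yc; rewrite -zq zc.
    have -> : b = c by apply/eqP; rewrite eq_sym eqEcard cb (Bk _ Bc) bk leqnn.
    exact: Bc.
have stab (x w y : T) : w != x -> y != x -> exists2 h, h \in G & h x = x /\ h w = y.
  move=> wx yx; case: Hv => Hv.
  - have c1B : [set~ w] \in B by apply: compB; rewrite cardsC1 cardT Hv.
    have c2B : [set~ y] \in B by apply: compB; rewrite cardsC1 cardT Hv.
    have x1 : x \in [set~ w] by rewrite !inE eq_sym.
    have x2 : x \in [set~ y] by rewrite !inE eq_sym.
    have [h Gh [hx hc]] := Hflag x x _ _ c1B x1 c2B x2.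
    exists h => //; split => //.
    have : h w \notin h @: [set~ w] by rewrite mem_imset ?inE ?eqxx //; exact: perm_inj.
    by rewrite hc !inE negbK => /eqP.
  - have [wy | wy] := eqVneq w y.
      by exists 1; rewrite ?group1 // !perm1.
    have : (0 < #|~: [set x; w; y]|)%N.
      rewrite cC; have : (#|[set x; w; y]| <= 3)%N.
        by apply: leq_trans (leq_card_setU _ _) _; rewrite cardsU1 !cards1; case: (_ \notin _).
      lia.
    case/card_gt0P => z; rewrite !inE !negb_or => /andP[/andP[zx zw] zy].
    have c1B : ~: [set w; z] \in B.
      by apply: compB; rewrite cC cards2 eq_sym zw cardT Hv; lia.
    have c2B : ~: [set y; z] \in B.
      by apply: compB; rewrite cC cards2 eq_sym zy cardT Hv; lia.
    have x1 : x \in ~: [set w; z] by rewrite !inE negb_or eq_sym wx eq_sym zx.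
    have x2 : x \in ~: [set y; z] by rewrite !inE negb_or eq_sym yx eq_sym zx.
    have [h Gh [hx hc]] := Hflag x x _ _ c1B x1 c2B x2.
    have inyz (u : T) : u \in [set w; z] -> h u \in [set y; z].
      move=> uwz; have : h u \notin h @: (~: [set w; z]).
        by rewrite mem_imset; [rewrite inE negbK | exact: perm_inj].
      by rewrite hc !inE negbK.
    have hw := inyz w (set21 _ _); have hz := inyz z (set22 _ _).
    case/set2P: hw => hw; first by exists h.
    case/set2P: hz => hz.
      exists (h * h); first by rewrite groupM.
      by rewrite !permM hx hw hz.
    by move: zw; rewrite -(inj_eq (@perm_inj _ h)) hw hz eqxx.
have [y0 y0x] := other x0.
split.
  apply/setP => b; rewrite inE; apply/idP/eqP => [/Bk // | /compB //].
apply: (@trans2 T G x0 y0); first by rewrite eq_sym.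
move=> x1 y1 x2 y2 xy1 xy2.
have [g Gg gx] := trans x1 x2.
have gy : g y1 != x2 by rewrite -gx (inj_eq perm_inj) eq_sym.
have yx2 : y2 != x2 by rewrite eq_sym.
have [h Gh [hx hy]] := stab x2 (g y1) y2 gy yx2.
exists (g * h); first by rewrite groupM.
by rewrite !permM gx hx hy.
Qed.
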